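(* Let $\mathcal V$ be a multivector field on $X$, where $X$ is invariant, and let $R\subset X$. The following are equivalent: (1) $R$ is a repeller; (2) $R$ is open, $\mathcal V$-compatible and invariant; (3) $R$ is an open isolated invariant set.
   Context: $X$ is a finite $T_0$ topological space. For $A\subset X$, $\operatorname{cl}A$ is its closure and $\operatorname{mo}A:=\operatorname{cl}A\setminus A$. $A$ is locally closed if it is the intersection of an open and a closed subset of $X$. $H$ denotes relative singular homology. A multivector is a nonempty locally closed subset of $X$; a multivector field $\mathcal V$ on $X$ is a partition of $X$ into multivectors. For $x\in X$, $[x]$ denotes the element of $\mathcal V$ containing $x$. A multivector $V$ is critical if $H(\operatorname{cl}V,\operatorname{mo}V)\neq0$, regular otherwise. $A\subset X$ is $\mathcal V$-compatible if for every $x\in X$ either $[x]\cap A=\emptyset$ or $[x]\subset A$. Put $\Pi_{\mathcal V}(x):=[x]\cup\operatorname{cl}\{x\}$, $\Pi_{\mathcal V}(A):=\bigcup_{x\in A}\Pi_{\mathcal V}(x)$ and $\Pi_{\mathcal V}^{-1}(A):=\{x\in X:\Pi_{\mathcal V}(x)\cap A\neq\emptyset\}$. A $\mathbb Z$-interval is $\mathbb Z\cap I$ for a real interval $I$. A solution in $A\subset X$ is a map $\varphi:D\to A$ on a $\mathbb Z$-interval $D$ with $\varphi(i+1)\in\Pi_{\mathcal V}(\varphi(i))$ whenever $i,i+1\in D$; it is full if $D=\mathbb Z$, and a path if $D$ is bounded, its endpoints being $\varphi(\min D)$ and $\varphi(\max D)$. A full solution $\varphi$ is essential if for every $t\in\mathbb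 Z$ with $[\varphi(t)]$ regular, the set $\{s\in\mathbb Z:\varphi(s)\notin[\varphi(t)]\}$ is unbounded below and unbounded above. $\operatorname{Inv}A$ is the set of $x\in A$ such that there is an essential full solution $\varphi$ with image in $A$ and $\varphi(0)=x$; $A$ is invariant if $\operatorname{Inv}A=A$. A closed set $N$ isolates an invariant set $S\subset N$ if (a) every path in $N$ with both endpoints in $S$ has image contained in $S$, and (b) $\Pi_{\mathcal V}(S)\subset N$. An invariant set is an isolated invariant set if some closed set isolates it. An invariant set $R$ is a repeller if $\Pi_{\mathcal V}^{-1}(R)=R$. *)

(* Defs.v *)
From HB Require Import structures.
From mathcomp Require Import all_boot all_order all_algebra.
Set Implicit Arguments. Unset Strict Implicit. Unset Printing Implicit Defensive.
Import Order.TTheory GRing.Theory Num.Theory.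

Section Defs.
Variable T : finType.
Variable opens : {set {set T}}.

Definition is_T0_topology : Prop :=
  [/\ set0 \in opens, [set: T] \in opens,
      (forall U W, U \in opens -> W \in opens -> U :|: W \in opens),
      (forall U W, U \in opens -> W \in opens -> U :&: W \in opens) &
      (forall x y : T, x != y ->
         exists2 U, U \in opens & (x \in U) != (y \in U))].

Definition is_open (A : {set T}) : bool := A \in opens.
Definition is_closed (A : {set T}) : bool := ~: A \in opens.

Definition cl (A : {set T}) : {set T} :=
  \bigcap_(C : {set T} | is_closed C && (A \subset C)) C.

Definition mo (A : {set T}) : {set T} := cl A :\: A.

Definition locally_closed (A : {set T}) : Prop :=
  exists U C, [/\ is_open U, is_closed C & A = U :&: C].

(* ---- relative homology of a pair of subspaces (Y, A), A ⊆ Y ----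
   Computed (McCord) as the simplicial homology with integer coefficients
   of the pair of order complexes of the specialization order
   x < y  <=>  x <> y /\ x \in cl {y}. *)
Definition spec_lt (x y : T) : bool := (x != y) && (x \in cl [set y]).

Definition simplexb (Y : {set T}) (s : seq T) : bool :=
  all (fun x => x \in Y) s && sorted spec_lt s.

Definition chain (n : nat) := {ffun n.+1.-tuple T -> int}.

Definition supported (Y : {set T}) n (c : chain n) : Prop :=
  forall t, c t != 0%R -> simplexb Y t.

Definition bd n (c : chain n.+1) : chain n :=
  [ffun s : n.+1.-tuple T =>
     (\sum_(t : n.+2.-tuple T) \sum_(i < n.+2)
        if tval s == take i t ++ drop i.+1 t
        then (-1) ^+ i * c t else 0)%R].

Definition rel_cycle (A : {set T}) n : chain n -> Prop :=
  match n with
  | 0 => fun _ => True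
  | m.+1 => fun z => supported A (bd z)
  end.

Definition rel_boundary (Y A : {set T}) n (z : chain n) : Prop :=
  exists (w : chain n.+1) (c : chain n),
    [/\ supported Y w, supported A c & forall s, z s = (bd w s + c s)%R].

Definition homology_nonzero (Y A : {set T}) : Prop :=
  exists n (z : chain n),
    [/\ supported Y z, rel_cycle A z & ~ rel_boundary Y A z].

Definition multivector_field (V : {set {set T}}) : Prop :=
  partition V [set: T] /\ (forall A, A \in V -> locally_closed A).

Variable V : {set {set T}}.

Definition critical (A : {set T}) : Prop := homology_nonzero (cl A) (mo A).

Definition compatible (A : {set T}) : Prop :=
  forall x, [disjoint pblock V x & A] \/ pblock V x \subset A.

Definition Pi (x : T) : {set T} := pblock V x :|: cl [set x].
Definition PiS (A : {set T}) : {set T} := \bigcup_(x in A) Pi x.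
Definition PiInv (A : {set T}) : {set T} := [set x | Pi x :&: A != set0].

Definition full_solution_in (A : {set T}) (phi : int -> T) : Prop :=
  (forall i, phi i \in A) /\ (forall i, phi (i + 1)%R \in Pi (phi i)).

Definition essential (phi : int -> T) : Prop :=
  forall t, ~ critical (pblock V (phi t)) ->
    forall m : int,
      (exists s : int, (s <= m)%R /\ phi s \notin pblock V (phi t)) /\
      (exists s : int, (m <= s)%R /\ phi s \notin pblock V (phi t)).

Definition in_Inv (A : {set T}) (x : T) : Prop :=
  exists phi, [/\ full_solution_in A phi, essential phi & phi 0%R = x].

Definition is_invariant (A : {set T}) : Prop :=
  forall x, x \in A <-> in_Inv A x.

(* A path with domain a bounded Z-interval is encoded (after reindexing)
   as a nonempty sequence x0 :: p; endpoints x0 and last x0 p. *)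
Definition path_in (N : {set T}) (x0 : T) (p : seq T) : bool :=
  path (fun x y => y \in Pi x) x0 p && all (fun x => x \in N) (x0 :: p).

Definition isolates (N S : {set T}) : Prop :=
  [/\ is_closed N, S \subset N,
      (forall x0 p, path_in N x0 p -> x0 \in S -> last x0 p \in S ->
         all (fun x => x \in S) (x0 :: p)) &
      PiS S \subset N].

Definition isolated_invariant (S : {set T}) : Prop :=
  is_invariant S /\ exists N, isolates N S.

Definition repeller (R : {set T}) : Prop :=
  is_invariant R /\ PiInv R = R.

End Defs.

(* Main.v *)
Require Import Defs.
From HB Require Import structures.
From mathcomp Require Import all_boot all_order all_algebra.
Set Implicit Arguments. Unset Strict Implicit. Unset Printing Implicit Defensive.

Section Aux.
Variable T : finType.
Variable opens : {set {set T}}.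
Variable V : {set {set T}}.
Hypothesis Htop : is_T0_topology opens.
Hypothesis HV : multivector_field opens V.

Lemma cl_sub (A : {set T}) : A \subset cl opens A.
Proof.
apply/subsetP=> x xA; apply/bigcapP=> C /andP[_ /subsetP]; exact.
Qed.

Lemma open_cl (R : {set T}) x y : is_open opens R -> y \in R -> y \in cl opens [set x] -> x \in R.
Proof.
move=> oR yR /bigcapP H; case: (boolP (x \in R)) => // xR.
have : y \in ~: R.
  apply: H; rewrite /is_closed setCK; apply/andP; split; [exact: oR | by rewrite sub1set inE].
by rewrite inE yR.
Qed.

Lemma cover_all x : x \in cover V.
Proof. by case: HV => /and3P[/eqP -> _ _] _; rewrite inE. Qed.

Lemma triv : trivIset V.
Proof. by case: HV => /and3P[]. Qed.

Lemma pb_sym x y : y \in pblock V x -> pblock V y = pblock V x.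
Proof. move=> h; exact: same_pblock triv h. Qed.

Lemma x_in_Pi x : x \in Pi opens V x.
Proof. by rewrite inE (subsetP (cl_sub _)) ?orbT // inE. Qed.

Lemma in_pb x : x \in pblock V x.
Proof. by rewrite mem_pblock cover_all. Qed.

Lemma open_of_PiInv (R : {set T}) : PiInv opens V R = R -> is_open opens R.
Proof.
move=> HR.
case: Htop => o0 oT oU oI _.
have key : R = \bigcup_(y in R) \bigcap_(U | (U \in opens) && (y \in U)) U.
  apply/setP=> z; apply/idP/idP.
    move=> zR; apply/bigcupP; exists z => //; apply/bigcapP=> U /andP[]//.
  case/bigcupP=> y yR /bigcapP Hz.
  have ycl : y \in cl opens [set z].
    apply/bigcapP=> C /andP[cC]; rewrite sub1set => zC.
    case: (boolP (y \in C)) => // yC.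
    have : z \in ~: C by apply: Hz; rewrite inE yC andbT; exact: cC.
    by rewrite inE zC.
  rewrite -HR inE; apply/set0Pn; exists y; by rewrite !inE ycl orbT yR.
rewrite /is_open key.
apply: (big_ind (fun U => U \in opens)) => //.
move=> y _; apply: (big_ind (fun U => U \in opens)) => //.
by move=> U /andP[].
Qed.

Lemma L01 (R : {set T}) : repeller opens V R ->
  is_open opens R /\ compatible V R /\ is_invariant opens V R.
Proof.
case=> inv HR; split; first exact: open_of_PiInv.
split=> //.
move=> x; case: (boolP [disjoint pblock V x & R]) => [h|]; first by left.
move/pred0Pn=> [y /andP[yx yR]]; right; apply/subsetP=> z zx.
rewrite -HR inE; apply/set0Pn; exists y.
rewrite /Pi !inE (pb_sym zx); apply/andP; split; [apply/orP; left; exact: yx | exact: yR].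
Qed.

Lemma PiInv_eq (R : {set T}) : is_open opens R -> compatible V R -> PiInv opens V R = R.
Proof.
move=> oR cR; apply/setP=> x; rewrite inE; apply/idP/idP; last first.
  by move=> xR; apply/set0Pn; exists x; rewrite inE x_in_Pi xR.
case/set0Pn=> y; rewrite !inE => /andP[/orP[yx|ycl] yR].
  case: (cR x) => [/pred0P/(_ y)|/subsetP]; first by rewrite /= yx yR.
  by apply; exact: in_pb.
exact: open_cl yR ycl.
Qed.

Lemma L12 (R : {set T}) : is_open opens R /\ compatible V R /\ is_invariant opens V R ->
  is_open opens R /\ isolated_invariant opens V R.
Proof.
case=> oR [cR inv]; split=> //; split=> //.
have HR := PiInv_eq oR cR.
exists [set: T]; split.
- by rewrite /is_closed setCT; case: Htop.
- exact: subsetT.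
- move=> x0 p /andP[pth _] _.
  elim: p x0 pth => [|y p IH] x0 /=; first by rewrite andbT.
  case/andP=> yx pth hl.
  have := IH y pth hl => /= /andP[yR ->]; rewrite yR !andbT.
  rewrite -HR inE; apply/set0Pn; exists y; by rewrite inE yx yR.
- exact: subsetT.
Qed.

Lemma L20 (R : {set T}) : is_open opens R /\ isolated_invariant opens V R -> repeller opens V R.
Proof.
case=> oR [inv [N [_ sRN Hp sPN]]]; split=> //.
apply/setP=> x; rewrite inE; apply/idP/idP; last first.
  by move=> xR; apply/set0Pn; exists x; rewrite inE x_in_Pi xR.
case/set0Pn=> y; rewrite !inE => /andP[/orP[yx|ycl] yR]; last first.
  exact: open_cl yR ycl.
have xy : x \in pblock V y by rewrite (pb_sym yx) in_pb.
have xPy : x \in Pi opens V y by rewrite inE xy.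
have xN : x \in N.
  apply: (subsetP sPN); apply/bigcupP; exists y => //.
have yN := subsetP sRN y yR.
have := Hp y [:: x; y].
rewrite /path_in /= xPy inE yx xN yN yR /= => /(_ isT isT isT).
by case/andP.
Qed.

End Aux.

Theorem theorem6p3 (T : finType) (opens : {set {set T}}) (V : {set {set T}})
  (Htop : is_T0_topology opens) (HV : multivector_field opens V)
  (HX : is_invariant opens V [set: T]) (R : {set T}) :
  [<-> repeller opens V R;
       is_open opens R /\ compatible V R /\ is_invariant opens V R;
       is_open opens R /\ isolated_invariant opens V R].
Proof.
tfae.
- exact: (L01 Htop HV).
- exact: (L12 Htop HV).
- exact: (L20 HV).
Qed.
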